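(* Let $d\ge3$, $h\ge1$. For each non-leaf vertex $i$ of $\mathcal{T}(d,h)$ choose a child $m_i$ of $i$ and put $J_i:=C_i\setminus\{m_i\}$, where $C_i$ is the set of children of $i$. Define $F(d,h):=\{0\}\cup\bigcup_{q=0}^{(h-2)/2}\bigcup_{i\in S_{2q+1}}J_i$ if $h$ is even, and $F(d,h):=\bigcup_{q=0}^{(h-1)/2}\bigcup_{i\in S_{2q}}J_i$ if $h$ is odd, where $S_k$ is the set of vertices at distance $k$ from the root $0$. Then $G(d,h)$ is generated by $\{\bar{\mathbf{x}}_i : i\in F(d,h)\}$.
   Context: Let $\mathcal{T}(d,h)$ be the rooted tree in which the root $0$ has $d$ children, every vertex at distance $1,\dots,h-1$ from the root has $d-1$ children, and the vertices at distance $h$ are leaves. Let $V$ be its vertex set, $A$ its adjacency matrix, $\Delta := dI-A$, and $\Lambda\subset\mathbb{Z}^V$ the lattice spanned by the rows of $\Delta$. Then $G(d,h):=\mathbb{Z}^V/\Lambda$; $\{\mathbf{x}_i:i\in V\}$ is the standard basis of $\mathbb{Z}^V$ and $\bar{\mathbf{v}}$ denotes the image of $\mathbf{v}$ in $G(d,h)$. *)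

(* Defs.v *)
From HB Require Import structures.
From mathcomp Require Import all_boot all_order all_algebra.
Set Implicit Arguments. Unset Strict Implicit. Unset Printing Implicit Defensive.
Import Order.TTheory GRing.Theory Num.Theory.
Local Open Scope ring_scope.

(* Vertices of T(d,h) are encoded as paths from the root: a word w of child
   indices; the root is [::], the children of the root are [:: c] with c < d,
   and the children of a non-root vertex w are rcons w c with c < d-1.
   The distance of w from the root is size w. *)
Fixpoint level (d k : nat) : seq (seq nat) :=
  match k with
  | 0 => [:: [::]]
  | k'.+1 => [seq rcons w c | w <- level d k',
               c <- iota 0 (if k' is 0 then d else d.-1)]
  end.

Definition verts (d h : nat) : seq (seq nat) :=
  flatten [seq level d k | k <- iota 0 h.+1].

Definition V (d h : nat) : finType := seq_sub (verts d h).

Definition isChild d h (u v : V d h) : bool :=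
  (size (val v) == (size (val u)).+1) && (take (size (val u)) (val v) == val u).

Definition adj d h (u v : V d h) : bool := isChild u v || isChild v u.

Definition children d h (i : V d h) : {set V d h} := [set j | isChild i j].

Definition S d h (k : nat) : {set V d h} := [set i | size (val i) == k].

Definition J d h (m : V d h -> V d h) (i : V d h) : {set V d h} :=
  children i :\ m i.

Definition F d h (m : V d h -> V d h) : {set V d h} :=
  if ~~ odd h then
    [set i | val i == [::]] :|:
      \bigcup_(q < ((h - 2) %/ 2).+1) \bigcup_(i in S d h (2 * q).+1) J m i
  else
    \bigcup_(q < ((h - 1) %/ 2).+1) \bigcup_(i in S d h (2 * q)) J m i.

Definition xb d h (i : V d h) : {ffun V d h -> int} :=
  [ffun j => (i == j)%:R].

Definition Delta d h (i : V d h) : {ffun V d h -> int} :=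
  [ffun j => (d%:Z) * (i == j)%:R - (adj i j)%:R].

Definition inLambda d h (v : {ffun V d h -> int}) : Prop :=
  exists a : V d h -> int, v = \sum_(k : V d h) Delta k *~ a k.

(* G(d,h) = Z^V / Lambda is generated by the classes of x_i, i in X:
   every class \bar{x}_j is an integer combination of those classes. *)
Definition generates d h (X : {set V d h}) : Prop :=
  forall j : V d h, exists c : V d h -> int,
    inLambda (xb j - \sum_(i in X) xb i *~ c i).

(* Main.v *)
Require Import Defs.
From HB Require Import structures.
From mathcomp Require Import all_boot all_order all_algebra zify.
Set Implicit Arguments. Unset Strict Implicit. Unset Printing Implicit Defensive.
Import Order.TTheory GRing.Theory Num.Theory.

Definition bnd (d k : nat) := if k is 0 then d else d.-1.

Lemma size_level d k w : w \in level d k -> size w = k.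
Proof.
elim: k w => [|k IH] w /=; first by rewrite inE => /eqP ->.
by case/allpairsPdep => x [y [/IH Hx _ ->]]; rewrite size_rcons Hx.
Qed.

Lemma level_rcons d k w c : w \in level d k -> (c < bnd d k)%N -> rcons w c \in level d k.+1.
Proof.
move=> Hw Hc /=; apply: (allpairs_f_dep (fun w c => rcons w c)) => //.
by rewrite mem_iota add0n; case: k Hw Hc.
Qed.

Lemma level_belast d k x : x \in level d k.+1 -> exists w c, x = rcons w c /\ w \in level d k.
Proof. by case/allpairsPdep => w [c [Hw _ ->]]; exists w, c. Qed.

Lemma mem_verts d h w : (w \in verts d h) = (size w <= h)%N && (w \in level d (size w)).
Proof.
apply/flatten_mapP/andP.
  case=> k; rewrite mem_iota add0n ltnS => Hk Hw.
  by rewrite (size_level Hw).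
case=> H1 H2; exists (size w) => //; by rewrite mem_iota add0n ltnS.
Qed.

Lemma size_V d h (v : V d h) : (size (val v) <= h)%N.
Proof. by case: v => w /=; rewrite mem_verts => /andP []. Qed.

Lemma isChild_size d h (u v : V d h) : isChild u v -> size (val v) = (size (val u)).+1.
Proof. by case/andP => /eqP. Qed.

Lemma isChild_uniq d h (u u' v : V d h) : isChild u v -> isChild u' v -> u = u'.
Proof.
move=> H1 H2; apply: val_inj.
have E : size (val u) = size (val u').
  by move: (isChild_size H1) (isChild_size H2) => -> [].
by case/andP: H1 => _ /eqP <-; case/andP: H2 => _ /eqP <-; rewrite E.
Qed.

Lemma take_rcons' (T : Type) (w : seq T) c : take (size w) (rcons w c) = w.
Proof. by rewrite -cats1 take_size_cat. Qed.

Lemma parent_ex d h (v : V d h) : (0 < size (val v))%N -> exists p : V d h, isChild p v.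
Proof.
case: v => x Hx /= Hs.
have /andP [Hsz Hl] : (size x <= h)%N && (x \in level d (size x)) by rewrite -mem_verts.
case E: (size x) Hs Hl => [//|k] _ /level_belast [w [c [Ex Hw]]].
have Hw' : w \in verts d h.
  rewrite mem_verts (size_level Hw) Hw andbT.
  by move: Hsz; rewrite E; apply: ltnW.
exists (SeqSub Hw'); rewrite /isChild /= Ex size_rcons eqxx /=.
by rewrite take_rcons' eqxx.
Qed.

Lemma child_ex d h (v : V d h) c : (size (val v) < h)%N -> (c < bnd d (size (val v)))%N ->
  exists u : V d h, isChild v u /\ val u = rcons (val v) c.
Proof.
case: v => x Hx /= Hs Hc.
have /andP [Hsz Hl] : (size x <= h)%N && (x \in level d (size x)) by rewrite -mem_verts.
have Hr : rcons x c \in verts d h.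
  rewrite mem_verts size_rcons Hs /=.
  by apply: level_rcons.
exists (SeqSub Hr); rewrite /isChild /= size_rcons eqxx take_rcons' eqxx; split => //.
Qed.

Lemma J_ex d h (m : V d h -> V d h) (v : V d h) : (3 <= d)%N -> (size (val v) < h)%N ->
  exists c, c \in J m v.
Proof.
move=> hd Hs.
have Hb : (1 < bnd d (size (val v)))%N by rewrite /bnd; case: (size _); lia.
have [u0 [H0 E0]] := child_ex (c := 0) Hs (ltnW Hb).
have [u1 [H1 E1]] := child_ex (c := 1) Hs Hb.
have Hne : u0 != u1.
  apply/eqP => E; move: (f_equal (fun x => last 0%N (val x)) E) => /=.
  by rewrite E0 E1 !last_rcons.
case: (eqVneq u0 (m v)) => [Em|Hm0].
  exists u1; rewrite /J !inE H1 andbT -Em eq_sym //.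
exists u0; rewrite /J !inE H0 andbT //.
Qed.
Local Open Scope ring_scope.

Section Gen.
Variables (d h : nat) (X : {set V d h}).

Definition gen (v : {ffun V d h -> int}) : Prop :=
  exists c a : V d h -> int, v = \sum_(i in X) xb i *~ c i + \sum_k Delta k *~ a k.

Lemma gen0 : gen 0.
Proof. by exists (fun _ => 0), (fun _ => 0); rewrite !big1 ?addr0 // => i _; rewrite mulr0z. Qed.

Lemma genD u v : gen u -> gen v -> gen (u + v).
Proof.
move=> [c1 [a1 ->]] [c2 [a2 ->]].
exists (fun i => c1 i + c2 i), (fun i => a1 i + a2 i).
under [X in _ = X + _]eq_bigr do rewrite mulrzDr.
under [X in _ = _ + X]eq_bigr do rewrite mulrzDr.
rewrite !big_split /=; rewrite addrACA; congr (_ + _); by rewrite addrACA.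
Qed.

Lemma genZ u z : gen u -> gen (u *~ z).
Proof.
move=> [c [a ->]]; exists (fun i => c i * z), (fun i => a i * z).
rewrite mulrzDl !mulrz_suml; congr (_ + _); apply: eq_bigr => i _; by rewrite mulrzA.
Qed.

Lemma genN u : gen u -> gen (- u).
Proof. by move=> /(genZ (-1)); rewrite mulrNz mulr1z. Qed.

Lemma genB u v : gen u -> gen v -> gen (u - v).
Proof. by move=> Hu /genN; apply: genD. Qed.

Lemma gen_sum (I : finType) (P : pred I) (F : I -> {ffun V d h -> int}) :
  (forall i, P i -> gen (F i)) -> gen (\sum_(i | P i) F i).
Proof.
move=> H; elim/big_rec: _ => [|i x Pi Hx]; first exact: gen0.
by apply: genD => //; apply: H.
Qed.

Lemma genX i : i \in X -> gen (xb i).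
Proof.
move=> Hi; exists (fun j => (j == i)%:R), (fun _ => 0).
rewrite [X in _ + X]big1 ?addr0; last by move=> k _; rewrite mulr0z.
rewrite (bigD1 i) //= eqxx mulr1z big1 ?addr0 // => j /andP [_ /negbTE ->].
by rewrite mulr0z.
Qed.

Lemma genDelta (k : V d h) : gen (Delta k).
Proof.
exists (fun _ => 0), (fun j => (j == k)%:R).
rewrite [X in X + _]big1 ?add0r; last by move=> k' _; rewrite mulr0z.
rewrite (bigD1 k) //= eqxx mulr1z big1 ?addr0 // => j /negbTE ->.
by rewrite mulr0z.
Qed.

Lemma DeltaE (k : V d h) : Delta k = xb k *~ d - \sum_(j | adj k j) xb j.
Proof.
apply/ffunP => j; rewrite !ffunE sum_ffunE ffunMzE ffunE.
congr (_ - _).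
  by rewrite mulrzz mulrC.
rewrite big_mkcond (bigD1 j) //= !ffunE eqxx big1 ?addr0.
  by case: (adj k j).
by move=> i /negbTE Hij; rewrite ffunE Hij; case: (adj k i).
Qed.

Lemma key (k u : V d h) : adj k u -> gen (xb k) -> (forall j, adj k j -> j != u -> gen (xb j)) ->
  gen (xb u).
Proof.
move=> Hku Hk Hj.
have E : xb u = xb k *~ d - Delta k - \sum_(j | adj k j && (j != u)) xb j.
  by rewrite DeltaE (bigD1 u) //= opprB addrCA subrr addr0 addrK.
rewrite E; apply: genB; first apply: genB.
- exact: genZ.
- exact: genDelta.
by apply: gen_sum => j /andP [H1 H2]; apply: Hj.
Qed.

End Gen.

Lemma F_J d h (m : V d h -> V d h) (v c : V d h) t :
  (size (val v) + (2*t).+1 = h)%N -> c \in J m v -> c \in F m.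
Proof.
move=> E Hc; rewrite /F.
have [s Es] : {s | size (val v) = s} by exists (size (val v)).
rewrite Es in E.
have H1 := odd_double_half h; have H2 := odd_double_half s.
case: ifP => Hodd.
  have Ho : odd s.
    case E2: (odd _) => //; move: Hodd H1 H2; rewrite E2; case: (odd h) => //= _; lia.
  rewrite Ho in H2.
  apply/setUP; right; apply/bigcupP.
  have Hq : (s./2 < ((h - 2) %/ 2).+1)%N.
    move: Hodd H1; case: (odd h) => //= _; lia.
  exists (Ordinal Hq) => //; apply/bigcupP; exists v => //.
  rewrite /S inE Es; apply/eqP => /=; lia.
have Ho : ~~ odd s.
  case E2: (odd _) => //; move: Hodd H1 H2; rewrite E2; case: (odd h) => //= _; lia.
rewrite (negbTE Ho) in H2.
apply/bigcupP.
have Hq : (s./2 < ((h - 1) %/ 2).+1)%N.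
  move: Hodd H1; case: (odd h) => //= _; lia.
exists (Ordinal Hq) => //; apply/bigcupP; exists v => //.
rewrite /S inE Es; apply/eqP => /=; lia.
Qed.

Lemma claimA d h (hd : (3 <= d)%N) (m : V d h -> V d h) t :
  forall v : V d h, (size (val v) + (2*t).+1 = h)%N -> gen (F m) (xb v).
Proof.
elim: t => [|t IH] v Hv.
  have [l Hl] := J_ex m hd (v := v) ltac:(lia).
  have Hlc : isChild v l by move: Hl; rewrite /J /children !inE => /andP [_].
  apply: (key (k := l)); first by rewrite /adj Hlc orbT.
    by apply: genX; apply: (F_J (t := 0)) Hv Hl.
  move=> j; rewrite /adj => /orP [Hj|Hj] Hne.
    have := size_V j; rewrite (isChild_size Hj) (isChild_size Hlc); lia.
  by rewrite (isChild_uniq Hj Hlc) eqxx in Hne.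
have [l Hl] := J_ex m hd (v := v) ltac:(lia).
have Hlc : isChild v l by move: Hl; rewrite /J /children !inE => /andP [_].
apply: (key (k := l)); first by rewrite /adj Hlc orbT.
  by apply: genX; apply: (F_J (t := t.+1)) Hv Hl.
move=> j; rewrite /adj => /orP [Hj|Hj] Hne.
  apply: IH; rewrite (isChild_size Hj) (isChild_size Hlc); lia.
by rewrite (isChild_uniq Hj Hlc) eqxx in Hne.
Qed.

Lemma claimB d h (hd : (3 <= d)%N) (hh : (1 <= h)%N) (m : V d h -> V d h)
  (hm : forall i : V d h, children i != set0 -> m i \in children i) k :
  forall v : V d h, (size (val v) <= k)%N -> gen (F m) (xb v).
Proof.
elim: k => [|k IH] v Hv.
  have Hs : size (val v) = 0%N by lia.
  have H1 := odd_double_half h.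
  case Ho: (odd h).
    apply: (@claimA _ _ hd m (h./2)); rewrite Hs; move: H1; rewrite Ho; lia.
  apply: genX; rewrite /F Ho /=; apply/setUP; left; rewrite inE.
  by apply/eqP/size0nil.
case: (ltnP (size (val v)) k.+1) => Hlt; first by apply: IH; lia.
have Hsv : size (val v) = k.+1 by lia.
have Hh := size_V v.
have H1 := odd_double_half (h - k.+1).
case Ho: (odd (h - k.+1)).
  apply: (@claimA _ _ hd m ((h - k.+1)./2)); move: H1; rewrite Ho; lia.
rewrite Ho /= in H1.
have [p Hp] := parent_ex (v := v) ltac:(lia).
have Hps : size (val p) = k by move: (isChild_size Hp); lia.
have HF : forall c, c \in J m p -> c \in F m.
  move=> c; apply: (F_J (t := (h - k.+1)./2)); lia.
case: (eqVneq v (m p)) => [Ev|Hne]; last first.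
  by apply: genX; apply: HF; rewrite /J /children !inE Hne.
apply: (key (k := p)); first by rewrite /adj Hp.
  by apply: IH; lia.
move=> j; rewrite /adj => /orP [Hj|Hj] Hne.
  by apply: genX; apply: HF; rewrite /J /children !inE -Ev Hne.
apply: IH; move: (isChild_size Hj); lia.
Qed.

Theorem lemma6p4 (d h : nat) (hd : (3 <= d)%N) (hh : (1 <= h)%N)
  (m : V d h -> V d h)
  (hm : forall i : V d h, children i != set0 -> m i \in children i) :
  generates (F m).
Proof.
move=> j.
have [c [a E]] := claimB hd hh hm (k := h) (v := j) (size_V j).
exists c, a; by rewrite E addrC addKr.
Qed.
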